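(* Let $\xi\in\Xi^*_{T1}$. Then there exist a distribution $\mu_1\in\Delta(\Pi_{T1})$ and a single plan $\pi_2\in\Pi_{T2}$ such that $\xi=f(\mu_1\otimes\delta_{\pi_2})$, where $\delta_{\pi_2}$ is the point mass at $\pi_2$; moreover $\xi[\varnothing,\sigma_{T2}]=1$ if $\pi_2\in\Pi_{T2}(\sigma_{T2})$ and $0$ otherwise. Symmetrically, for $\xi\in\Xi^*_{T2}$ there exist $\pi_1\in\Pi_{T1}$ and $\mu_2\in\Delta(\Pi_{T2})$ with $\xi=f(\delta_{\pi_1}\otimes\mu_2)$.
   Context: A finite extensive-form game is played on a tree; each internal node belongs to one of the players $T1,T2,O$ or to chance. The nodes of player $i$ are partitioned into information sets $\mathcal I_i$; all nodes of $I\in\mathcal I_i$ share the action set $A_I$. Perfect recall is assumed. The sequences of player $i$ are $\Sigma_i=\{(I,a):I\in\mathcal I_i,a\in A_I\}\cup\{\varnothing\}$. For an information set $I$ of player $i$, $\sigma(I)$ denotes the last pair $(I',a')$ of player $i$ on the root-to-$I$ path, or $\varnothing$ if $i$ does not act before $I$. Two information sets $I_i\in\mathcal I_i$, $I_j\in\mathcal I_j$ are connected ($I_i\rightleftharpoons I_j$) if there exist $v\in I_i$, $w\in I_j$ such that the root-to-$v$ path passes through $w$ or vice versa. A pair $(\sigma_i,\sigma_j)$ is relevant ($\sigma_i\bowtie\sigma_j$) if one of them is $\varnothing$ or $\sigma_i=(I_i,a_i)$, $\sigma_j=(I_j,a_j)$ with $I_i\rightleftharpoons I_j$; $\Sigma_{T1}\bowtie\Sigma_{T2}$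 is the set of relevant pairs. Similarly $\sigma_i\bowtie I_j$ if $\sigma_i=\varnothing$ or $\sigma_i=(I_i,a_i)$ with $I_i\rightleftharpoons I_j$. A reduced-normal-form plan of player $i$ chooses an action at every information set of $i$ that remains reachable given the plan's own choices; their set is $\Pi_i$. For $\sigma=(I,a)$, $\Pi_i(\sigma)$ is the set of plans prescribing all of $i$'s actions on the path to $I$ and playing $a$ at $I$; $\Pi_i(\varnothing)=\Pi_i$. For $\mu_1\in\Delta(\Pi_{T1}),\mu_2\in\Delta(\Pi_{T2})$, $\mu_1\otimes\mu_2$ is the product distribution $(\pi_1,\pi_2)\mapsto\mu_1(\pi_1)\mu_2(\pi_2)$. The map $f$ sends $\mu_T\in\Delta(\Pi_{T1}\times\Pi_{T2})$ to the vector $f(\mu_T)$ indexed by relevant pairs with $f(\mu_T)[\sigma_{T1},\sigma_{T2}]=\sum_{\pi_1\in\Pi_{T1}(\sigma_{T1}),\pi_2\in\Pi_{T2}(\sigma_{T2})}\mu_T(\pi_1,\pi_2)$. The von Stengel–Forges polytope $\mathcal V_T$ is the set of nonnegative vectors $\xi$ indexed by relevant pairs with: $\xi[\varnothing,\varnothing]=1$; $\sum_{a\in A_{I}}\xi[(I,a),\sigma_{T2}]=\xi[\sigma(I),\sigma_{T2}]$ for all $I\in\mathcal I_{T1}$, $\sigma_{T2}\in\Sigma_{T2}$ with $I\bowtie\sigma_{T2}$; $\sum_{b\in A_{J}}\xi[\sigma_{T1},(J,b)]=\xi[\sigma_{T1},\sigma(J)]$ for all $J\in\mathcal I_{T2}$,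 $\sigma_{T1}\in\Sigma_{T1}$ with $\sigma_{T1}\bowtie J$. The semi-randomized correlation plans are $\Xi^*_{T1}=\{\xi\in\mathcal V_T:\xi[\varnothing,\sigma_{T2}]\in\{0,1\}\ \forall\sigma_{T2}\in\Sigma_{T2}\}$ and $\Xi^*_{T2}=\{\xi\in\mathcal V_T:\xi[\sigma_{T1},\varnothing]\in\{0,1\}\ \forall\sigma_{T1}\in\Sigma_{T1}\}$. *)

(* Defs.v *)
From HB Require Import structures.
From mathcomp Require Import all_boot all_order all_algebra.
From mathcomp Require Import reals.
Set Implicit Arguments. Unset Strict Implicit. Unset Printing Implicit Defensive.
Import Order.TTheory GRing.Theory Num.Theory.
Local Open Scope ring_scope.

Inductive player := T1 | T2 | O | Chance.
Definition player_eqb (p q : player) :=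
  match p, q with T1, T1 | T2, T2 | O, O | Chance, Chance => true | _, _ => false end.
Lemma player_eqP : Equality.axiom player_eqb.
Proof. by case; case; constructor. Qed.
HB.instance Definition _ := hasDecEq.Build player player_eqP.

(** A finite game tree.  [par v] is the parent of [v] ([None] for the root),
    [act v] is the action labelling the edge from [par v] to [v],
    [owner v] the player acting at [v], [info v] the information set of [v]. *)
Record game := Game {
  node : finType;
  infoset : finType;
  action : finType;
  par : node -> option node;
  act : node -> action;
  owner : node -> player;
  info : node -> infoset }.

Section Game.
Variable G : game.
Local Notation V := (node G).
Local Notation I := (infoset G).
Local Notation A := (action G).
Local Notation par := (@par G).
Local Notation act := (@act G).
Local Notation owner := (@owner G).
Local Notation info := (@info G).

Definition children (u : V) : {set V} := [set w | par w == Some u].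
Definition actset_node (u : V) : {set A} := [set act w | w in children u].
Definition internal (u : V) : bool := actset_node u != set0.

Fixpoint up (n : nat) (v : V) : seq (V * A) :=
  match n with
  | 0 => [::]
  | n'.+1 => if par v is Some u then rcons (up n' u) (u, act v) else [::]
  end.
Definition hist (v : V) : seq (V * A) := up #|V| v.

Definition pathseq (i : player) (v : V) : seq (I * A) :=
  [seq (info x.1, x.2) | x <- [seq x <- hist v | owner x.1 == i]].

(** well-formedness: finite rooted tree, distinct action labels among
    siblings, information sets are owned by one player and share the action
    set, perfect recall for every (non-chance) player. *)
Definition wf_game : Prop :=
  [/\ (forall v : V, iter #|V| (obind par) (Some v) = None),
      (forall r r' : V, par r = None -> par r' = None -> r = r'),
      (forall w w' : V, par w = par w' -> par w <> None -> act w = act w' -> w = w'),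
      (forall u u' : V, info u = info u' ->
          owner u = owner u' /\ actset_node u = actset_node u') &
      (forall u u' : V, info u = info u' -> owner u <> Chance -> internal u ->
          pathseq (owner u) u = pathseq (owner u) u')].

Definition isInfo (i : player) (J : I) : bool :=
  [exists u, [&& info u == J, owner u == i & internal u]].
Definition rep (J : I) : option V := [pick u | info u == J].
Definition actset (J : I) : {set A} :=
  if rep J is Some u then actset_node u else set0.
(** the pairs of player i on the path to J (same for all nodes of J by perfect recall) *)
Definition seqI (i : player) (J : I) : seq (I * A) :=
  if rep J is Some u then pathseq i u else [::].
(** sigma(J): last pair of player i before J, or None (= the empty sequence) *)
Definition sigmaI (i : player) (J : I) : option (I * A) :=
  last None (map Some (seqI i J)).

(** sequences of player i: None is the empty sequence *)
Definition isSeq (i : player) (s : option (I * A)) : bool :=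
  if s is Some (J, a) then isInfo i J && (a \in actset J) else true.

Definition strict_anc (w v : V) : bool := w \in [seq x.1 | x <- hist v].
Definition connected (J1 J2 : I) : bool :=
  [exists v, exists w, [&& info v == J1, info w == J2 &
                          strict_anc w v || strict_anc v w]].
Definition relevant (s1 s2 : option (I * A)) : bool :=
  match s1, s2 with
  | Some (J1, _), Some (J2, _) => connected J1 J2
  | _, _ => true
  end.
Definition relevantI (s : option (I * A)) (J : I) : bool :=
  if s is Some (J1, _) then connected J1 J else true.

(** reduced-normal-form plans: partial maps infoset -> action *)
Definition plan := {ffun I -> option A}.
Definition reachable (i : player) (p : plan) (J : I) : bool :=
  [exists v, (info v == J) &&
     all (fun x => (owner x.1 != i) || (p (info x.1) == Some x.2)) (hist v)].
Definition isPlan (i : player) (p : plan) : bool :=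
  [forall J, (p J != None) == (isInfo i J && reachable i p J)] &&
  [forall J, if p J is Some a then a \in actset J else true].
Definition inPi (i : player) (s : option (I * A)) (p : plan) : bool :=
  isPlan i p &&
  (if s is Some (J, a) then
     all (fun x => p x.1 == Some x.2) (seqI i J) && (p J == Some a)
   else true).

Variable R : realType.

(** vectors indexed by (relevant) pairs of sequences *)
Definition corr := option (I * A) -> option (I * A) -> R.

Definition inVSF (xi : corr) : Prop :=
  [/\ (forall s1 s2, isSeq T1 s1 -> isSeq T2 s2 -> relevant s1 s2 -> 0 <= xi s1 s2),
      xi None None = 1,
      (forall (J : I) s2, isInfo T1 J -> isSeq T2 s2 -> relevantI s2 J ->
         \sum_(a in actset J) xi (Some (J, a)) s2 = xi (sigmaI T1 J) s2) &
      (forall (J : I) s1, isInfo T2 J -> isSeq T1 s1 -> relevantI s1 J ->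
         \sum_(b in actset J) xi s1 (Some (J, b)) = xi s1 (sigmaI T2 J))].

Definition inXi1 (xi : corr) : Prop :=
  inVSF xi /\ forall s2, isSeq T2 s2 -> xi None s2 = 0 \/ xi None s2 = 1.
Definition inXi2 (xi : corr) : Prop :=
  inVSF xi /\ forall s1, isSeq T1 s1 -> xi s1 None = 0 \/ xi s1 None = 1.

Definition isPlanDist (i : player) (mu : plan -> R) : Prop :=
  [/\ forall p, 0 <= mu p, \sum_p mu p = 1 & forall p, mu p != 0 -> isPlan i p].

Definition prodd (m1 m2 : plan -> R) : plan * plan -> R :=
  fun pp => m1 pp.1 * m2 pp.2.
Definition dirac (p : plan) : plan -> R := fun q => (q == p)%:R.

Definition fmap (mu : plan * plan -> R) : corr :=
  fun s1 s2 => \sum_(pp : plan * plan | inPi T1 s1 pp.1 && inPi T2 s2 pp.2) mu pp.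

End Game.

(* Main.v *)
Require Import Defs.
From HB Require Import structures.
From mathcomp Require Import all_boot all_order all_algebra.
From mathcomp Require Import reals.
Set Implicit Arguments. Unset Strict Implicit. Unset Printing Implicit Defensive.
Import Order.TTheory GRing.Theory Num.Theory.
Local Open Scope ring_scope.

Section Tree.
Variable G : game.
Hypothesis wfG : wf_game G.
Local Notation V := (node G).
Local Notation I := (infoset G).
Local Notation A := (action G).
Local Notation par := (@par G).
Local Notation act := (@act G).
Local Notation owner := (@owner G).
Local Notation info := (@info G).
Implicit Types (J : I).

Lemma up_stable n v : iter n (obind par) (Some v) = None ->
  forall m, (n <= m)%N -> up m v = up n v.
Proof.
elim: n v => [|n IH] v //= Hit [|m] //= Hnm.
rewrite -iterS iterSr /= in Hit.
case Hp: (par v) => [w|] //; rewrite Hp in Hit.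
by rewrite (IH w Hit m Hnm).
Qed.

Lemma hist_par v w : par v = Some w -> hist v = rcons (hist w) (w, act v).
Proof.
move=> Hp; case: wfG => Hit _ _ _ _.
have Hc : (0 < #|V|)%N by apply/card_gt0P; exists v.
have [n En] : exists n, #|V| = n.+1 by case: #|V| Hc => [|n] // _; exists n.
move: (Hit v); rewrite /hist En => Hv.
rewrite /= Hp; congr rcons.
rewrite iterSr /= Hp in Hv.
exact: (esym (up_stable Hv (leqnSn n))).
Qed.

Lemma hist_root v : par v = None -> hist v = [::].
Proof.
move=> Hp; have Hc : (0 < #|V|)%N by apply/card_gt0P; exists v.
by rewrite /hist; case: #|V| Hc => [|n] //= _; rewrite Hp.
Qed.

Lemma node_ind (P : V -> Prop) :
  (forall v, (forall w, par v = Some w -> P w) -> P v) -> forall v, P v.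
Proof.
move=> H v; case: wfG => Hit _ _ _ _; move: (Hit v).
elim: #|V| v => [|n IH] v //= Hv.
apply: H => w Hw; apply: IH.
by rewrite -iterS iterSr /= Hw in Hv.
Qed.

Lemma pathseq_par i u w : par u = Some w ->
  pathseq i u = if owner w == i then rcons (pathseq i w) (info w, act u)
                else pathseq i w.
Proof.
move=> Hp; rewrite /pathseq (hist_par Hp) filter_rcons /=.
by case: (owner w == i); rewrite ?map_rcons.
Qed.

Lemma pathseq_root i u : par u = None -> pathseq i u = [::].
Proof. by move=> Hp; rewrite /pathseq (hist_root Hp). Qed.

Lemma sanc_par (x u w : V) : par u = Some w ->
  strict_anc x u = (x == w) || strict_anc x w.
Proof.
move=> Hp; rewrite /strict_anc (hist_par Hp) map_rcons mem_rcons in_cons //.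
Qed.

Lemma sanc_root (x u : V) : par u = None -> strict_anc x u = false.
Proof. by move=> Hp; rewrite /strict_anc (hist_root Hp). Qed.

Lemma sanc_trans (x w v : V) : strict_anc x w -> strict_anc w v -> strict_anc x v.
Proof.
move=> Hxw; elim/node_ind: v => v IH.
case Hp: (par v) => [p|]; last by rewrite sanc_root.
rewrite !(sanc_par _ Hp) => /orP [/eqP<-|Hwp]; first by rewrite Hxw orbT.
by rewrite IH // orbT.
Qed.

Lemma sanc_total (x v w : V) : strict_anc x w -> strict_anc v w ->
  x = v \/ strict_anc x v \/ strict_anc v x.
Proof.
elim/node_ind: w => w IH.
case Hp: (par w) => [p|]; last by rewrite sanc_root.
rewrite !(sanc_par _ Hp) => /orP [/eqP->|Hx] /orP [/eqP->|Hv].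
- by left.
- by right; right.
- by right; left.
- exact: (IH p Hp Hx Hv).
Qed.

Lemma pathseq_last i (u : V) p z : pathseq i u = rcons p z ->
  exists x, [/\ owner x = i, info x = z.1, z.2 \in actset_node x,
               strict_anc x u & p = pathseq i x].
Proof.
elim/node_ind: u p z => u IH p z.
case Hp: (par u) => [w|]; last by rewrite pathseq_root //; case: p.
rewrite (pathseq_par _ Hp).
case: eqP => Ho.
- move/rcons_inj => [<- <-]; exists w; split => //.
  + apply/imsetP; exists u => //; by rewrite inE Hp.
  + by rewrite (sanc_par _ Hp) eqxx.
- move=> Hps; have [x [H1 H2 H3 H4 H5]] := IH w Hp p z Hps.
  exists x; split => //; by rewrite (sanc_par _ Hp) H4 orbT.
Qed.


Lemma isInfo_node i J v : isInfo i J -> info v = J -> owner v = i /\ internal v.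
Proof.
case/existsP => u /and3P [/eqP Hu /eqP Ho Hi] Hv.
case: wfG => _ _ _ Hinf _.
have [Ho' Ha] := Hinf u v (etrans Hu (esym Hv)).
by split; [rewrite -Ho' | rewrite /internal -Ha].
Qed.

Lemma rep_node i J : isInfo i J -> exists u, rep J = Some u /\ info u = J.
Proof.
case/existsP => u /and3P [/eqP Hu _ _].
rewrite /rep; case: pickP => [x /eqP Hx|/(_ u)]; first by exists x.
by rewrite Hu eqxx.
Qed.

Lemma seqI_node i J v : i != Chance -> isInfo i J -> info v = J ->
  seqI i J = pathseq i v.
Proof.
move=> Hi HJ Hv; have [u [Hr Hu]] := rep_node HJ.
rewrite /seqI Hr; have [Ho Hint] := isInfo_node HJ Hu.
case: wfG => _ _ _ _ Hpr.
have := Hpr u v (etrans Hu (esym Hv)); rewrite Ho; apply => //; exact/eqP.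
Qed.

Lemma actset_node_eq J v : info v = J -> actset J = actset_node v.
Proof.
move=> Hv; rewrite /actset /rep; case: pickP => [x /eqP Hx|/(_ v)]; last first.
  by rewrite Hv eqxx.
case: wfG => _ _ _ Hinf _.
by have [_ ->] := Hinf x v (etrans Hx (esym Hv)).
Qed.

Lemma seqI_rec i J : i != Chance -> isInfo i J ->
  (seqI i J = [::] /\ sigmaI i J = None) \/
  exists J' a', [/\ sigmaI i J = Some (J', a'), isInfo i J', a' \in actset J'
                  & seqI i J = rcons (seqI i J') (J', a')].
Proof.
move=> Hi HJ; have [u [Hr Hu]] := rep_node HJ.
have Hs := seqI_node Hi HJ Hu.
rewrite /sigmaI; move E: (seqI i J) Hs => s; case/lastP: s E => [|p [J' a']] E Hs.
  by left.
right; have [x [Ho Hx Ha Hanc Hp]] := pathseq_last (esym Hs).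
simpl in Hx, Ha; subst J'.
have HI : isInfo i (info x).
  apply/existsP; exists x; rewrite eqxx Ho eqxx /internal /=.
  by apply/set0Pn; exists a'.
exists (info x), a'; split => //.
- by rewrite map_rcons last_rcons.
- by rewrite (actset_node_eq (erefl _)).
- by rewrite (seqI_node Hi HI (erefl _)) Hp.
Qed.

Lemma reach_all i J (p : plan G) : i != Chance -> isInfo i J ->
  reachable i p J = all (fun x => p x.1 == Some x.2) (seqI i J).
Proof.
move=> Hi HJ.
have key : forall v, all (fun x => (owner x.1 != i) || (p (info x.1) == Some x.2)) (hist v)
     = all (fun x => p x.1 == Some x.2) (pathseq i v).
  move=> v; rewrite /pathseq all_map all_filter; apply: eq_all => x /=.
  by case: (owner x.1 == i).
apply/existsP/idP => [[v /andP [/eqP Hv]]|H].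
  by rewrite key (seqI_node Hi HJ Hv).
have [u [_ Hu]] := rep_node HJ.
by exists u; rewrite Hu eqxx key -(seqI_node Hi HJ Hu).
Qed.

Lemma plan_def i (p : plan G) J : isPlan i p ->
  (p J != None) = isInfo i J && reachable i p J.
Proof. by rewrite /isPlan => /andP [/forallP H1 _]; move: (H1 J) => /eqP. Qed.

Lemma plan_some i (p : plan G) J a : isPlan i p -> p J = Some a ->
  [/\ isInfo i J, a \in actset J & reachable i p J].
Proof.
move=> Hp E; have := plan_def J Hp; rewrite E /= => /esym/andP [H1 H2].
split => //; move: Hp; rewrite /isPlan => /andP [_ /forallP /(_ J)]; by rewrite E.
Qed.

Lemma inPi_info i J a (p : plan G) : i != Chance -> isInfo i J -> isPlan i p ->
  inPi i (Some (J, a)) p = (p J == Some a).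
Proof.
move=> Hi HJ Hp; rewrite /inPi Hp /=.
case E: (p J == Some a); last by rewrite andbF.
move/eqP: E => E; have [_ _ HR] := plan_some Hp E.
by rewrite -(reach_all _ Hi HJ) HR.
Qed.

Lemma ind_sum (R : realType) i (p : plan G) J : i != Chance -> isPlan i p -> isInfo i J ->
  \sum_(a in actset J) (if p J == Some a then 1 else 0 : R) =
  if inPi i (sigmaI i J) p then 1 else 0.
Proof.
move=> Hi Hp HJ.
have -> : \sum_(a in actset J) (if p J == Some a then 1 else 0 : R) =
          if p J != None then 1 else 0.
  case E: (p J) => [a0|]; last by rewrite big1.
  have [_ Ha0 _] := plan_some Hp E.
  rewrite (bigD1 a0) //= eqxx big1 ?addr0 // => a /andP [_ Hne].
  by case: eqP => // [[Ea]]; rewrite Ea eqxx in Hne.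
rewrite (plan_def J Hp) HJ /= (reach_all _ Hi HJ).
case: (seqI_rec Hi HJ) => [[-> ->]|[J' [a' [-> HJ' Ha' ->]]]].
  by rewrite /inPi Hp.
rewrite all_rcons /= (inPi_info _ Hi HJ' Hp).
case E: (p J' == Some a') => //=.
have [_ _ HR] := plan_some Hp (eqP E).
by rewrite -(reach_all _ Hi HJ') HR.
Qed.


Lemma actset_nonempty i J : isInfo i J -> exists a, a \in actset J.
Proof.
move=> HJ; have [u [_ Hu]] := rep_node HJ.
have [_ Hint] := isInfo_node HJ Hu.
rewrite (actset_node_eq Hu); exact/set0Pn.
Qed.

Lemma inPi_sigma i (p : plan G) J : i != Chance -> isPlan i p -> isInfo i J ->
  inPi i (sigmaI i J) p = (p J != None).
Proof.
move=> Hi Hp HJ; rewrite (plan_def J Hp) HJ /= (reach_all _ Hi HJ).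
case: (seqI_rec Hi HJ) => [[-> ->]|[J' [a' [-> HJ' Ha' ->]]]].
  by rewrite /inPi Hp.
rewrite all_rcons /= (inPi_info _ Hi HJ' Hp).
case E: (p J' == Some a') => //=.
have [_ _ HR] := plan_some Hp (eqP E).
by rewrite -(reach_all _ Hi HJ') HR.
Qed.

Lemma seq_ind i (P : option (I * A) -> Prop) : i != Chance -> P None ->
  (forall J a, isInfo i J -> a \in actset J -> P (sigmaI i J) -> P (Some (J, a))) ->
  forall s, isSeq i s -> P s.
Proof.
move=> Hi H0 HS.
suff H : forall n J, (size (seqI i J) <= n)%N -> isInfo i J -> P (sigmaI i J).
  case => [[J a]|] //= /andP [HJ Ha].
  by apply: HS => //; apply: (H _ J (leqnn _)).
elim => [|n IH] J Hn HJ.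
  case: (seqI_rec Hi HJ) => [[_ ->] //|[J' [a' [-> HJ' Ha' E]]]].
  by rewrite E size_rcons in Hn.
case: (seqI_rec Hi HJ) => [[_ ->] //|[J' [a' [-> HJ' Ha' E]]]].
apply: HS => //; apply: IH => //.
by rewrite E size_rcons ltnS in Hn.
Qed.

Definition plan_of i (c : I -> option A) : plan G :=
  [ffun J => if isInfo i J && all (fun x => c x.1 == Some x.2) (seqI i J)
             then c J else None].

Lemma plan_of_all i c J : i != Chance -> isInfo i J ->
  all (fun x => plan_of i c x.1 == Some x.2) (seqI i J) =
  all (fun x => c x.1 == Some x.2) (seqI i J).
Proof.
move=> Hi; move: {2}(size (seqI i J)) (leqnn (size (seqI i J))) => n.
elim: n J => [|n IH] J Hn HJ.
  case: (seqI_rec Hi HJ) => [[-> _] //|[J' [a' [_ HJ' Ha' E]]]].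
  by rewrite E size_rcons in Hn.
case: (seqI_rec Hi HJ) => [[-> _] //|[J' [a' [_ HJ' Ha' E]]]].
rewrite E !all_rcons /= ffunE HJ' /= IH //; last first.
  by rewrite E size_rcons ltnS in Hn.
by case: (all _ _) => //=; rewrite andbF.
Qed.

Lemma plan_of_plan i c : i != Chance ->
  (forall J, isInfo i J -> exists2 a, c J = Some a & a \in actset J) ->
  isPlan i (plan_of i c).
Proof.
move=> Hi Hc; rewrite /isPlan; apply/andP; split; apply/forallP => J; rewrite ffunE.
  case HJ: (isInfo i J) => //=.
  rewrite (reach_all _ Hi HJ) plan_of_all //.
  case: (all _ _) => //=; have [a -> _] := Hc J HJ; by [].
case: ifP => // /andP [HJ _]; by have [a -> Ha] := Hc J HJ.
Qed.

Lemma plan_of_some i c J a : plan_of i c J = Some a -> c J = Some a.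
Proof. by rewrite ffunE; case: ifP. Qed.

Lemma sum_ind_eq (R : realType) (T : finType) (P : pred T) (q : T) :
  \sum_(p | P p) (if p == q then 1 else 0 : R) = if P q then 1 else 0.
Proof.
case Pq: (P q).
  rewrite (bigD1 q) //= eqxx big1 ?addr0 // => p /andP [_ /negbTE ->] //.
by rewrite big1 // => p Pp; case: eqP => // E; rewrite E Pq in Pp.
Qed.

Lemma le_sum_one (R : realType) J (F : A -> R) a : a \in actset J ->
  (forall b, b \in actset J -> 0 <= F b) -> F a <= \sum_(b in actset J) F b.
Proof.
move=> Ha Hnn; rewrite (bigD1 a) //= lerDl; apply: sumr_ge0 => b /andP [Hb _].
exact: Hnn.
Qed.


Variable R : realType.

Lemma seq_le_none i (r : option (I * A) -> R) : i != Chance ->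
  (forall s, isSeq i s -> 0 <= r s) ->
  (forall J, isInfo i J -> \sum_(a in actset J) r (Some (J, a)) = r (sigmaI i J)) ->
  forall s, isSeq i s -> r s <= r None.
Proof.
move=> Hi Hnn Hsum; apply: seq_ind => // J a HJ Ha IH.
apply: le_trans IH; rewrite -Hsum //; apply: le_sum_one => // b Hb.
by apply: Hnn; rewrite /= HJ.
Qed.

Lemma kuhn0 i (r : option (I * A) -> R) : i != Chance ->
  (forall s, isSeq i s -> 0 <= r s) ->
  (forall J, isInfo i J -> \sum_(a in actset J) r (Some (J, a)) = r (sigmaI i J)) ->
  r None = 0 ->
  exists mu : plan G -> R, [/\ forall p, 0 <= mu p, forall p, mu p != 0 -> isPlan i p &
     forall s, isSeq i s -> \sum_(p | inPi i s p) mu p = r s].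
Proof.
move=> Hi Hnn Hsum H0; exists (fun _ => 0); split => // [p|s Hs]; first by rewrite eqxx.
rewrite big1 //; apply/esym/le_anti; rewrite Hnn // andbT -H0.
exact: (seq_le_none Hi Hnn Hsum Hs).
Qed.

Lemma kuhn i (r : option (I * A) -> R) : i != Chance ->
  (forall s, isSeq i s -> 0 <= r s) ->
  (forall J, isInfo i J -> \sum_(a in actset J) r (Some (J, a)) = r (sigmaI i J)) ->
  exists mu : plan G -> R, [/\ forall p, 0 <= mu p, forall p, mu p != 0 -> isPlan i p &
     forall s, isSeq i s -> \sum_(p | inPi i s p) mu p = r s].
Proof.
move=> Hi.
suff H : forall n (r : option (I * A) -> R),
    (#|[set s | isSeq i s & r s != 0%R]| <= n)%N ->
  (forall s, isSeq i s -> 0 <= r s) ->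
  (forall J, isInfo i J -> \sum_(a in actset J) r (Some (J, a)) = r (sigmaI i J)) ->
  exists mu : plan G -> R, [/\ forall p, 0 <= mu p, forall p, mu p != 0 -> isPlan i p &
     forall s, isSeq i s -> \sum_(p | inPi i s p) mu p = r s].
  by move=> Hnn Hsum; apply: (H _ r (leqnn _)).
elim => [|n IH] {}r Hn Hnn Hsum.
  case: (eqVneq (r None) 0) => H0; first exact: kuhn0.
  have : (0 < #|[set s | isSeq i s & r s != 0%R]|)%N.
    by apply/card_gt0P; exists None; rewrite inE /= H0.
  by rewrite leqn0 in Hn; rewrite (eqP Hn).
case: (eqVneq (r None) 0) => H0; first exact: kuhn0.
have rpos : 0 < r None by rewrite lt0r H0 Hnn.
pose c (J : I) := if [pick a in actset J | 0 < r (Some (J, a))] is Some a then Some a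
                  else [pick a in actset J].
have Hc : forall J, isInfo i J -> exists2 a, c J = Some a & a \in actset J.
  move=> J HJ; rewrite /c; case: pickP => [a /andP [Ha _]|_]; first by exists a.
  case: pickP => [a Ha|]; first by exists a.
  by have [a Ha] := actset_nonempty HJ => /(_ a); rewrite Ha.
have Hcpos : forall J, isInfo i J -> 0 < r (sigmaI i J) ->
    exists a, c J = Some a /\ 0 < r (Some (J, a)).
  move=> J HJ Hp; rewrite /c; case: pickP => [a /andP [Ha Hra]|Hno]; first by exists a.
  have : \sum_(a in actset J) r (Some (J, a)) = 0.
    apply: big1 => a Ha; apply/le_anti; rewrite Hnn ?andbT /= ?HJ ?Ha //.
    by move: (Hno a); rewrite Ha /= => /negbT; rewrite -leNgt.
  by rewrite Hsum // => E; rewrite E ltxx in Hp.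
pose q := plan_of i c.
have Hq : isPlan i q by exact: plan_of_plan.
have Hpos : forall s, isSeq i s -> inPi i s q -> 0 < r s.
  apply: seq_ind => // J a HJ Ha IHs; rewrite (inPi_info _ Hi HJ Hq) => /eqP Eq.
  have Hs : inPi i (sigmaI i J) q by rewrite (inPi_sigma Hi Hq HJ) Eq.
  have [a0 [Ec Hr]] := Hcpos J HJ (IHs Hs).
  by move: (plan_of_some Eq); rewrite Ec => [[<-]].
pose Pq : {pred option (I * A)} := [pred s | isSeq i s && inPi i s q].
have P0 : Pq None by rewrite /Pq /= /inPi Hq.
case: (@Order.TotalTheory.arg_minP _ _ _ None Pq r P0) => s0 /andP [Hs0 Hq0] Hmin.
set lam := r s0.
have lpos : 0 < lam by exact: Hpos.
pose r' s := r s - lam * (if inPi i s q then 1 else 0).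
have Hnn' : forall s, isSeq i s -> 0 <= r' s.
  move=> s Hs; rewrite /r'; case Es: (inPi i s q).
    by rewrite mulr1 subr_ge0; apply: Hmin; rewrite /Pq /= Hs Es.
  by rewrite mulr0 subr0 Hnn.
have Hsum' : forall J, isInfo i J ->
    \sum_(a in actset J) r' (Some (J, a)) = r' (sigmaI i J).
  move=> J HJ; rewrite /r' sumrB Hsum // -mulr_sumr; congr (_ - lam * _).
  rewrite -(ind_sum R Hi Hq HJ); apply: eq_bigr => a _.
  by rewrite (inPi_info _ Hi HJ Hq).
have Hcard : (#|[set s | isSeq i s & r' s != 0%R]| <= n)%N.
  rewrite -ltnS; apply: leq_trans Hn; apply: proper_card; apply/properP; split.
    apply/subsetP => s; rewrite !inE => /andP [Hs Hne]; rewrite Hs /=.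
    move: Hne; rewrite /r'; case Es: (inPi i s q); last by rewrite mulr0 subr0.
    by move=> _; rewrite gt_eqF // Hpos.
  exists s0; first by rewrite inE Hs0 /= gt_eqF.
  by rewrite inE /r' Hq0 mulr1 subrr eqxx andbF.
have [mu' [Hmu1 Hmu2 Hmu3]] := IH r' Hcard Hnn' Hsum'.
exists (fun p => mu' p + lam * (if p == q then 1 else 0)); split.
- move=> p; apply: addr_ge0 => //; apply: mulr_ge0; first exact: ltW.
  by case: (p == q).
- move=> p; case: (eqVneq p q) => [-> //|Hpq]; rewrite mulr0 addr0; exact: Hmu2.
- move=> s Hs; rewrite big_split /= Hmu3 // -mulr_sumr sum_ind_eq /r'.
  by rewrite subrK.
Qed.


Lemma detplan i (d : option (I * A) -> R) : i != Chance -> d None = 1 ->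
  (forall s, isSeq i s -> d s = 0 \/ d s = 1) ->
  (forall J, isInfo i J -> \sum_(a in actset J) d (Some (J, a)) = d (sigmaI i J)) ->
  exists p, isPlan i p /\ forall s, isSeq i s -> d s = if inPi i s p then 1 else 0.
Proof.
move=> Hi H1 H01 Hsum.
have Hnn : forall s, isSeq i s -> 0 <= d s by move=> s Hs; case: (H01 s Hs) => ->.
pose c (J : I) := if [pick a in actset J | d (Some (J, a)) == 1] is Some a then Some a
                  else [pick a in actset J].
have Hc : forall J, isInfo i J -> exists2 a, c J = Some a & a \in actset J.
  move=> J HJ; rewrite /c; case: pickP => [a /andP [Ha _]|_]; first by exists a.
  case: pickP => [a Ha|]; first by exists a.
  by have [a Ha] := actset_nonempty HJ => /(_ a); rewrite Ha.
pose q := plan_of i c.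
have Hq : isPlan i q by exact: plan_of_plan.
exists q; split => //; apply: seq_ind => //; first by rewrite H1 /inPi Hq.
move=> J a HJ Ha IH; rewrite (inPi_info _ Hi HJ Hq).
have Hnn' : forall b, b \in actset J -> 0 <= d (Some (J, b)).
  by move=> b Hb; apply: Hnn; rewrite /= HJ.
have H01' : forall b, b \in actset J -> d (Some (J, b)) = 0 \/ d (Some (J, b)) = 1.
  by move=> b Hb; apply: H01; rewrite /= HJ.
move: IH; rewrite (inPi_sigma Hi Hq HJ).
case: (eqVneq (q J) None) => [EqN|NqN] /= IH.
  rewrite EqN /=; move: (Hsum J HJ); rewrite IH => /(psumr_eq0P Hnn') /(_ a Ha) //.
case Eq: (q J) NqN => [b0|] // _.
have Ec := plan_of_some Eq.
have Hb0 : d (Some (J, b0)) = 1 /\ b0 \in actset J.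
  move: Ec; rewrite /c; case: pickP => [b /andP [Hb /eqP Hdb] [<-] //|Hno].
  have : \sum_(b in actset J) d (Some (J, b)) = 0.
    apply: big1 => b Hb; case: (H01' b Hb) => // E.
    by move: (Hno b); rewrite Hb E eqxx.
  by rewrite Hsum // IH => /eqP; rewrite oner_eq0.
case: Hb0 => Hdb0 Hb0.
case: (eqVneq a b0) => [-> |Hab]; first by rewrite eqxx.
have -> : (Some b0 == Some a) = false by apply/eqP => [[E]]; rewrite E eqxx in Hab.
move: (Hsum J HJ); rewrite IH (bigD1 b0) //= Hdb0 => /eqP.
rewrite -subr_eq0 addrC addrK => /eqP.
move/(psumr_eq0P (P := fun b => (b \in actset J) && (b != b0))).
apply; last by rewrite Ha Hab.
by move=> b /andP [Hb _]; exact: Hnn'.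
Qed.


Lemma connected_sym1 J1 J2 : connected J1 J2 -> connected J2 J1.
Proof.
case/existsP => v /existsP [w /and3P [H1 H2 H3]].
by apply/existsP; exists w; apply/existsP; exists v; rewrite H1 H2 orbC.
Qed.

Lemma connected_sym J1 J2 : connected J1 J2 = connected J2 J1.
Proof. by apply/idP/idP; apply: connected_sym1. Qed.

Lemma sigma_rcons i J z : sigmaI i J = Some z -> exists p, seqI i J = rcons p z.
Proof.
rewrite /sigmaI; case/lastP: (seqI i J) => [|p z'] //.
by rewrite map_rcons last_rcons => [[->]]; exists p.
Qed.

Lemma connected_sigma i j J J2 J' a' : i != Chance -> i != j ->
  isInfo i J -> isInfo j J2 -> sigmaI i J = Some (J', a') ->
  connected J J2 -> connected J' J2.
Proof.
move=> Hi Hij HJ HJ2 Hs.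
case/existsP => w /existsP [v /and3P [/eqP Hw /eqP Hv Hanc]].
have [p Ep] := sigma_rcons Hs.
rewrite (seqI_node Hi HJ Hw) in Ep.
have [x [Ho Hx _ Hxw _]] := pathseq_last Ep.
have [Hov _] := isInfo_node HJ2 Hv.
apply/existsP; exists x; apply/existsP; exists v; rewrite Hx Hv !eqxx /=.
case/orP: Hanc => Ha.
  have [Exv|[H|H]] := sanc_total Hxw Ha; last by rewrite H.
    by rewrite -Exv Ho in Hov; subst j; rewrite eqxx in Hij.
  by rewrite H orbT.
by rewrite (sanc_trans Hxw Ha) orbT.
Qed.


Lemma isSeq_sigma i J : i != Chance -> isInfo i J -> isSeq i (sigmaI i J).
Proof.
move=> Hi HJ; case: (seqI_rec Hi HJ) => [[_ ->] //|[J' [a' [-> HJ' Ha' _]]]].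
by rewrite /= HJ' Ha'.
Qed.

Lemma gen i j (x : option (I * A) -> option (I * A) -> R) :
  i != Chance -> j != Chance -> i != j ->
  (forall s t, isSeq i s -> isSeq j t -> relevant s t -> 0 <= x s t) ->
  x None None = 1 ->
  (forall J t, isInfo i J -> isSeq j t -> relevantI t J ->
     \sum_(a in actset J) x (Some (J, a)) t = x (sigmaI i J) t) ->
  (forall J s, isInfo j J -> isSeq i s -> relevantI s J ->
     \sum_(b in actset J) x s (Some (J, b)) = x s (sigmaI j J)) ->
  (forall t, isSeq j t -> x None t = 0 \/ x None t = 1) ->
  exists mu p, [/\ isPlanDist i mu, isPlan j p,
    (forall s t, isSeq i s -> isSeq j t -> relevant s t ->
       x s t = (\sum_(q | inPi i s q) mu q) * (if inPi j t p then 1 else 0)) &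
    (forall t, isSeq j t -> x None t = if inPi j t p then 1 else 0)].
Proof.
move=> Hi Hj Hij Hnn H11 Hsi Hsj H01.
have Hji : j != i by rewrite eq_sym.
have relN : forall s : option (I * A), relevant s None.
  by move=> [[? ?]|].
have [mu [Hmu1 Hmu2 Hmu3]] := kuhn (r := fun s => x s None) Hi
  (fun s Hs => Hnn s None Hs erefl (relN s))
  (fun J HJ => Hsi J None HJ erefl erefl).
have [p [Hp Hd]] := detplan (d := fun t => x None t) Hj H11 H01
  (fun J HJ => Hsj J None HJ erefl erefl).
have rel_si : forall J a t, isInfo i J -> isSeq j t -> relevant (Some (J, a)) t ->
    relevant (sigmaI i J) t.
  move=> J a [[J2 b]|] HJ Ht //=; try by case: (sigmaI i J) => [[? ?]|].
  case/andP: Ht => HJ2 _ Hc; case Es: (sigmaI i J) => [[J' a']|] //=.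
  exact: (connected_sigma Hi Hij HJ HJ2 Es Hc).
have rel_sj : forall J b s, isInfo j J -> isSeq i s -> relevant s (Some (J, b)) ->
    relevant s (sigmaI j J).
  move=> J b [[J1 a]|] HJ Hs //=; try by case: (sigmaI j J) => [[? ?]|].
  case/andP: Hs => HJ1 _ Hc; case Es: (sigmaI j J) => [[J' b']|] //=.
  rewrite connected_sym; rewrite connected_sym in Hc.
  exact: (connected_sigma Hj Hji HJ HJ1 Es Hc).
have HZ : forall s, isSeq i s -> forall t, isSeq j t -> relevant s t ->
    x None t = 0 -> x s t = 0.
  apply: seq_ind => // J a HJ Ha IH t Ht Hr Hd0.
  have Hst : isSeq i (Some (J, a)) by rewrite /= HJ Ha.
  apply/le_anti; rewrite Hnn // andbT.
  case: t Ht Hr Hd0 => [[J2 b]|] Ht Hr Hd0; last by rewrite H11 in Hd0; move/eqP: Hd0; rewrite oner_eq0.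
  rewrite -(IH _ Ht (rel_si _ _ _ HJ Ht Hr) Hd0) -Hsi //; last by rewrite /= connected_sym.
  apply: le_sum_one => // a' Ha'; apply: Hnn => //; first by rewrite /= HJ Ha'.
have relJ : forall s J b b', relevant s (Some (J, b)) -> relevant s (Some (J, b')).
  by move=> [[? ?]|].
have HU : forall t, isSeq j t -> forall s, isSeq i s -> relevant s t ->
    x None t = 1 -> x s t = x s None.
  apply: seq_ind => // J b HJ Hb IH s Hs Hr Hd1.
  have Hnnd : forall b', b' \in actset J -> 0 <= x None (Some (J, b')).
    by move=> b' Hb'; apply: Hnn => //; rewrite /= HJ Hb'.
  have HsumN := Hsj J None HJ erefl erefl.
  have Hsig1 : x None (sigmaI j J) = 1.
    case: (H01 _ (isSeq_sigma Hj HJ)) => // E.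
    move: HsumN; rewrite E => /(psumr_eq0P Hnnd) /(_ b Hb).
    by rewrite Hd1 => /eqP; rewrite oner_eq0.
  have Hrest : forall b', b' \in actset J -> b' != b -> x None (Some (J, b')) = 0.
    move=> b' Hb' Hne; move: HsumN; rewrite Hsig1 (bigD1 b) //= Hd1 => /eqP.
    rewrite -subr_eq0 addrC addrK => /eqP.
    move/(psumr_eq0P (P := fun c => (c \in actset J) && (c != b))).
    apply; last by rewrite Hb' Hne.
    by move=> c /andP [Hc _]; exact: Hnnd.
  have Hrs : relevantI s J by case: s Hs Hr => [[? ?]|].
  rewrite -(IH s Hs (rel_sj _ _ _ HJ Hs Hr) Hsig1) -(Hsj J s HJ Hs Hrs).
  rewrite (bigD1 b) //= big1 ?addr0 // => b' /andP [Hb' Hne].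
  apply: (HZ s Hs (Some (J, b'))); first by rewrite /= HJ Hb'.
    exact: (relJ s J b b' Hr).
  exact: Hrest.
exists mu, p; split => //.
- split; [exact: Hmu1| |exact: Hmu2].
  rewrite -H11 -Hmu3 //; rewrite [RHS]big_mkcond; apply: eq_bigr => q _.
  rewrite /inPi andbT; case: ifP => // Hq.
  by apply/eqP; apply: contraFT Hq => /Hmu2.
- move=> s t Hs Ht Hr; rewrite Hmu3 // -Hd //.
  case: (H01 t Ht) => E; rewrite E ?mulr0 ?mulr1.
    exact: HZ.
  exact: HU.
Qed.

End Tree.

Lemma sum_ind_nat (R : realType) (T : finType) (P : pred T) (q : T) :
  \sum_(b | P b) ((b == q)%:R : R) = if P q then 1 else 0.
Proof.
rewrite -(sum_ind_eq R P q); apply: eq_bigr => b _; by case: (b == q).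
Qed.

Lemma fmap1 (R : realType) (G : game) (mu : plan G -> R) (p : plan G) s1 s2 :
  fmap (prodd mu (dirac R p)) s1 s2 =
  (\sum_(q | inPi T1 s1 q) mu q) * (if inPi T2 s2 p then 1 else 0).
Proof.
rewrite /fmap /prodd /dirac.
rewrite -(pair_big (fun q => inPi T1 s1 q) (fun q => inPi T2 s2 q)
          (fun a b => mu a * (b == p)%:R)) /=.
rewrite mulr_suml; apply: eq_bigr => q _.
by rewrite -mulr_sumr sum_ind_nat.
Qed.

Lemma fmap2 (R : realType) (G : game) (mu : plan G -> R) (p : plan G) s1 s2 :
  fmap (prodd (dirac R p) mu) s1 s2 =
  (\sum_(q | inPi T2 s2 q) mu q) * (if inPi T1 s1 p then 1 else 0).
Proof.
rewrite /fmap /prodd /dirac.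
rewrite -(pair_big (fun q => inPi T1 s1 q) (fun q => inPi T2 s2 q)
          (fun a b => (a == p)%:R * mu b)) /=.
under eq_bigr => q _ do rewrite -mulr_sumr.
by rewrite -mulr_suml sum_ind_nat mulrC.
Qed.

Lemma relevant_sym (G : game) (s t : option (infoset G * action G)) :
  relevant s t = relevant t s.
Proof. by case: s t => [[? ?]|] [[? ?]|] //=; rewrite connected_sym. Qed.

Theorem mainTheorem6 (R : realType) (G : game) :
  wf_game G ->
  (forall xi : corr G R, inXi1 xi ->
     exists (mu1 : plan G -> R) (p2 : plan G),
       [/\ isPlanDist T1 mu1, isPlan T2 p2,
           (forall s1 s2, isSeq T1 s1 -> isSeq T2 s2 -> relevant s1 s2 ->
              xi s1 s2 = fmap (prodd mu1 (dirac R p2)) s1 s2) &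
           (forall s2, isSeq T2 s2 ->
              xi None s2 = if inPi T2 s2 p2 then 1 else 0)]) /\
  (forall xi : corr G R, inXi2 xi ->
     exists (p1 : plan G) (mu2 : plan G -> R),
       [/\ isPlan T1 p1, isPlanDist T2 mu2 &
           (forall s1 s2, isSeq T1 s1 -> isSeq T2 s2 -> relevant s1 s2 ->
              xi s1 s2 = fmap (prodd (dirac R p1) mu2) s1 s2)]).
Proof.
move=> wf; split.
  move=> xi [[Hnn H11 Hs1 Hs2] H01].
  have [mu [p [Hmu Hp Hx Hd]]] :=
    @gen G wf R T1 T2 xi isT isT isT Hnn H11 Hs1 Hs2 H01.
  exists mu, p; split => // s1 s2 H1 H2 Hr.
  by rewrite Hx // fmap1.
move=> xi [[Hnn H11 Hs1 Hs2] H01].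
have Hnn' : forall s t, isSeq T2 s -> isSeq T1 t -> relevant s t -> 0 <= xi t s.
  by move=> s t Hs Ht Hr; apply: Hnn => //; rewrite relevant_sym.
have [mu [p [Hmu Hp Hx Hd]]] :=
  @gen G wf R T2 T1 (fun s t => xi t s) isT isT isT Hnn' H11 Hs2 Hs1 H01.
exists p, mu; split => // s1 s2 H1 H2 Hr.
by rewrite fmap2 -Hx // relevant_sym.
Qed.
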